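(* With $\mathcal{L}=\{I_\lambda:\lambda\in\operatorname{Irr}(B)\}$ and $\mathcal{A}=\{I_\sigma:\sigma\in\operatorname{Aut}(G)\}$, one has the internal decomposition $$\operatorname{PI}(B)=(\mathcal{L}\rtimes\mathcal{A})\times\langle-\mathrm{id}\rangle,$$ where $\mathcal{L}\rtimes\mathcal{A}$ is exactly the subgroup of perfect isometries with all-positive sign, $\mathcal{L}\cong\operatorname{Irr}(B)\cong G$ and $\mathcal{A}\cong\operatorname{Aut}(G)$. Consequently $\operatorname{PI}(B)\cong (G\rtimes\operatorname{Aut}(G))\times C_2$.
   Context: Let $p$ be a prime, $\zeta$ a primitive $p$-th root of unity, $K=\mathbb{Q}_p(\zeta)$, $\mathcal{O}=\mathbb{Z}_p[\zeta]$. Let $G=\langle g\rangle$ be cyclic of order $p$, $B=\mathcal{O}G$, $\operatorname{Irr}(B)=\{\chi_0,\dots,\chi_{p-1}\}$ with $\chi_a(g^b)=\zeta^{ab}$; $\operatorname{Irr}(B)$ is a group under pointwise multiplication. $R_K(B)$ is the free abelian group on $\operatorname{Irr}(B)$ with the standard inner product. For a linear map $I$ of $R_K(B)$ put $\mu_I(x,y)=\sum_{\chi}I(\chi)(x)\chi(y)$. A generalized character $\mu$ of $G\times G$ is perfect if (i) $\mu(x,y)/|C_G(x)|,\ \mu(x,y)/|C_G(y)|\in\mathcal{O}$ for all $x,y$; (ii) whenever $\mu(x,y)\ne0$, $x$ is $p$-regular iff $y$ is. $\operatorname{PI}(B)$ is the group of bijective linear isometries $I$ of $R_K(B)$ with $\mu_I$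 perfect. $I$ has all-positive sign if $I(\chi)\in\operatorname{Irr}(B)$ for all $\chi\in\operatorname{Irr}(B)$. For $\lambda\in\operatorname{Irr}(B)$, $I_\lambda(\chi)=\lambda\chi$; for $\sigma\in\operatorname{Aut}(G)$, $I_\sigma(\chi)=\chi^\sigma$ where $\chi^\sigma(h)=\chi(h^{\sigma^{-1}})$ (extended linearly). $\operatorname{Aut}(G)$ acts on $G$ naturally in the semidirect product. *)

(* Defs.v *)
From HB Require Import structures.
From mathcomp Require Import all_boot all_order all_algebra all_fingroup all_solvable all_field all_character.
Set Implicit Arguments. Unset Strict Implicit. Unset Printing Implicit Defensive.
Import GRing.Theory Num.Theory.
Local Open Scope ring_scope.

(* Irr(B) = {chi_0, ..., chi_(p-1)}, chi_a (g^b) = zeta^(ab), values in algC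
   (Q(zeta) is embedded in algC; zeta a primitive p-th root of unity). *)
Definition chi (gT : finGroupType) (p : nat) (g : gT) (z : algC) (a : 'I_p)
  (x : gT) : algC :=
  \sum_(k < p) (x == (g ^+ k)%g)%:R * z ^+ (a * k).

(* An element of R_K(B) is an integer row vector u (coordinates on Irr(B));
   a linear map I of R_K(B) is an integer matrix M with
   I(chi_a) = \sum_b M a b chi_b, i.e. u |-> u *m M on coordinates. *)
Definition inner (p : nat) (u v : 'rV[int]_p) : int := \sum_(i < p) u 0 i * v 0 i.

Definition Ichi (gT : finGroupType) (p : nat) (g : gT) (z : algC)
  (M : 'M[int]_p) (a : 'I_p) (x : gT) : algC :=
  \sum_(b < p) (M a b)%:~R * chi g z b x.

Definition mu (gT : finGroupType) (p : nat) (g : gT) (z : algC)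
  (M : 'M[int]_p) (x y : gT) : algC :=
  \sum_(a < p) Ichi g z M a x * chi g z a y.

(* Membership in O = Z_p[zeta], for elements of Q(zeta) (embedded in algC):
   O \cap Q(zeta) = Z[zeta] localized at the unique prime above p. *)
Definition inO (p : nat) (w : algC) : Prop :=
  exists m : nat, coprime m p /\ (m%:R * w \in Aint).

Definition perfect (gT : finGroupType) (G : {group gT}) (p : nat) (g : gT)
  (z : algC) (M : 'M[int]_p) : Prop :=
  forall x y, x \in G -> y \in G ->
    [/\ inO p (mu g z M x y / #|('C_G[x])%g|%:R),
        inO p (mu g z M x y / #|('C_G[y])%g|%:R)
      & mu g z M x y != 0 -> ((p^'.-elt x)%g = (p^'.-elt y)%g)].

Definition isPI (gT : finGroupType) (G : {group gT}) (p : nat) (g : gT)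
  (z : algC) (M : 'M[int]_p) : Prop :=
  [/\ bijective (fun u : 'rV[int]_p => u *m M),
      (forall u v : 'rV[int]_p, inner (u *m M) (v *m M) = inner u v)
    & perfect G g z M].

Definition allpos (p : nat) (M : 'M[int]_p) : Prop :=
  forall a : 'I_p, exists b : 'I_p, forall c : 'I_p, M a c = (c == b)%:R.

Definition Lmx (gT : finGroupType) (G : {group gT}) (p : nat) (g : gT)
  (z : algC) (lam : gT -> algC) : 'M[int]_p :=
  \matrix_(a < p, b < p)
    (if [forall h in G, lam h * chi g z a h == chi g z b h] then 1 else 0).

Definition Amx (gT : finGroupType) (G : {group gT}) (p : nat) (g : gT)
  (z : algC) (s : {perm gT}) : 'M[int]_p :=
  \matrix_(a < p, b < p)
    (if [forall h in G, chi g z a ((s^-1)%g h) == chi g z b h] then 1 else 0).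

Arguments Lmx {gT} G {p} g z lam.
Arguments Amx {gT} G {p} g z s.

(* Main.v *)
Require Import Defs.
From HB Require Import structures.
From mathcomp Require Import all_boot all_order all_algebra all_fingroup all_solvable all_field all_character.
From mathcomp Require Import ring zify.
Import GRing.Theory Num.Theory.
Local Open Scope ring_scope.
Set Implicit Arguments. Unset Strict Implicit. Unset Printing Implicit Defensive.

Lemma modinv (u p : nat) : (0 < p)%N -> coprime u p -> exists w, (u * w = 1 %[mod p])%N.
Proof.
move=> p0 cu; exists (u ^ (totient p).-1)%N.
by rewrite -expnS prednK ?totient_gt0 // Euler_exp_totient.
Qed.

Section S.
Variables (p : nat) (gT : finGroupType) (G : {group gT}) (g : gT) (z : algC).
Hypotheses (pr_p : prime p) (defG : G = <[g]>%G) (cardG : #|G| = p)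
  (prim_z : p.-primitive_root z).

Lemma p_gt0 : (0 < p)%N. Proof. exact: prime_gt0. Qed.
Lemma p_gt1 : (1 < p)%N. Proof. exact: prime_gt1. Qed.

Lemma ord_g : #[g]%g = p. Proof. by rewrite -cardG defG. Qed.
Lemma gG : g \in G. Proof. by rewrite defG cycle_id. Qed.

Lemma Gexp x : x \in G -> exists2 k, (k < p)%N & x = (g ^+ k)%g.
Proof.
rewrite defG => /cycleP[i ->]; exists (i %% p)%N; first by rewrite ltn_mod p_gt0.
by rewrite -ord_g expg_mod_order.
Qed.

Lemma gX_eq m n : ((g ^+ m)%g == (g ^+ n)%g) = (m == n %[mod p])%N.
Proof. by rewrite eq_expg_mod_order ord_g. Qed.

Lemma zX_eq m n : (z ^+ m == z ^+ n) = (m == n %[mod p])%N.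
Proof. exact: eq_prim_root_expr. Qed.

Lemma zX_mod m : z ^+ (m %% p) = z ^+ m.
Proof. exact: prim_expr_mod. Qed.

Lemma chi_exp (a : 'I_p) n : chi g z a (g ^+ n)%g = z ^+ (a * n).
Proof.
rewrite /chi (bigD1 (Ordinal (ltn_pmod n p_gt0))) //= big1 => [|k /negbTE nk].
  rewrite addr0 gX_eq modn_mod eqxx mul1r -zX_mod -[RHS]zX_mod.
  by rewrite modnMmr.
rewrite gX_eq; case: eqP => [e|]; last by rewrite mul0r.
case/eqP: nk; apply: val_inj => /=; rewrite e modn_small //.
Qed.

Lemma chi_out (a : 'I_p) x : x \notin G -> chi g z a x = 0.
Proof.
move=> xG; rewrite /chi big1 // => k _; case: eqP => [e|]; last by rewrite mul0r.
by case/negP: xG; rewrite e groupX ?gG.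
Qed.

Lemma chi1 (a : 'I_p) : chi g z a 1%g = 1.
Proof. by rewrite -(expg0 g) chi_exp muln0 expr0. Qed.


Definition P (u c : nat) : 'M[int]_p :=
  \matrix_(a < p, b < p) ((nat_of_ord b == ((u * a + c) %% p)%N)%:R).

Lemma PE u c a b : P u c a b = (nat_of_ord b == ((u * a + c) %% p)%N)%:R.
Proof. by rewrite mxE. Qed.

Lemma modn_norm u a c : ((u * a + c) %% p = ((u %% p) * a + c %% p) %% p)%N.
Proof. by rewrite -modnDm -modnMml modnDm modnDmr. Qed.

Lemma P_eqmod u c u' c' : (u = u' %[mod p])%N -> (c = c' %[mod p])%N ->
  P u c = P u' c'.
Proof.
move=> eu ec; apply/matrixP => a b; rewrite !PE.
by rewrite modn_norm eu ec -modn_norm.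
Qed.

Lemma PM u c u' c' : P u c *m P u' c' = P (u * u') (c * u' + c').
Proof.
apply/matrixP => a b; rewrite !mxE.
rewrite (bigD1 (Ordinal (ltn_pmod (u * a + c)%N p_gt0))) //= big1 => [|e /negbTE ne].
  rewrite !mxE eqxx mul1r addr0 -modnDml modnMmr modnDml.
  by congr ((_ == (_ %% p)%N)%:R); ring.
rewrite !mxE; case: eqP => [ee|]; last by rewrite mul0r.
by case/eqP: ne; apply: val_inj.
Qed.

Lemma P10 : P 1 0 = 1%:M.
Proof.
by apply/matrixP => a b; rewrite PE !mxE mul1n addn0 modn_small // eq_sym.
Qed.

Definition o0 : 'I_p := Ordinal p_gt0.
Definition o1 : 'I_p := Ordinal p_gt1.

Lemma P_inj u c u' c' : P u c = P u' c' ->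
  (u = u' %[mod p])%N /\ (c = c' %[mod p])%N.
Proof.
move=> e.
have h0 := congr1 (fun M : 'M_p => M o0 (Ordinal (ltn_pmod c p_gt0))) e.
move: h0; rewrite /= !PE /= !muln0 !add0n eqxx.
case: eqP => [ec _ | _] ; last by move/eqP; rewrite oner_eq0.
have h1 := congr1 (fun M : 'M_p => M o1 (Ordinal (ltn_pmod (u + c)%N p_gt0))) e.
move: h1; rewrite /= !PE /= !muln1 eqxx.
case: eqP => [eu _ | _] ; last by move/eqP; rewrite oner_eq0.
split => //; apply/eqP; rewrite -(eqn_modDr c) eu.
by rewrite -modnDmr -ec modnDmr.
Qed.

Lemma sP_inj (e e' : bool) u c u' c' :
  (-1) ^+ e *: P u c = (-1) ^+ e' *: P u' c' -> e = e' /\ P u c = P u' c'.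
Proof.
move=> h.
have h0 := congr1 (fun M : 'M_p => M o0 (Ordinal (ltn_pmod c p_gt0))) h.
move: h0; rewrite /= !mxE /= !muln0 !add0n eqxx mulr1.
case: eqP => [ec | _]; last by rewrite mulr0 => /eqP; rewrite signr_eq0.
rewrite mulr1 => /signr_inj ee; split => //.
by move: h; rewrite ee => /(congr1 ( *:%R ((-1) ^+ e'))); rewrite !scalerA -expr2 sqrr_sign !scale1r.
Qed.


Lemma aut_exp t k : t \in Aut G -> t (g ^+ k)%g = (t g ^+ k)%g.
Proof. by move=> tA; rewrite -(autmE tA) morphX ?gG. Qed.

Lemma Lmx_P (lam : gT -> algC) c :
  (forall n, lam (g ^+ n)%g = z ^+ (c * n)) -> Lmx G g z lam = P 1 c.
Proof.
move=> hl; apply/matrixP => a b; rewrite !mxE mul1n.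
suff -> : [forall h in G, lam h * chi g z a h == chi g z b h] =
   (nat_of_ord b == ((a + c) %% p)%N) by case: eqP.
apply/idP/idP => [/forall_inP H | /eqP eb].
  have := H g gG; rewrite -(expg1 g) hl !chi_exp !muln1 -exprD zX_eq.
  by rewrite eq_sym modn_small // addnC.
apply/forall_inP => h /Gexp [k _ ->]; rewrite hl !chi_exp -exprD zX_eq eb.
by rewrite modnMml mulnDl addnC.
Qed.

Lemma Amx_P s v : s \in Aut G -> (s^-1)%g g = (g ^+ v)%g ->
  Amx G g z s = P v 0.
Proof.
move=> sA hv; have siA : (s^-1)%g \in Aut G by rewrite groupV.
apply/matrixP => a b; rewrite !mxE addn0.
suff -> : [forall h in G, chi g z a ((s^-1)%g h) == chi g z b h] =
   (nat_of_ord b == ((v * a) %% p)%N) by case: eqP.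
apply/idP/idP => [/forall_inP H | /eqP eb].
  have := H g gG; rewrite hv -[in chi g z b g](expg1 g) !chi_exp muln1 zX_eq.
  by rewrite eq_sym modn_small // mulnC.
apply/forall_inP => h /Gexp [k _ ->]; rewrite aut_exp // hv -expgM !chi_exp zX_eq eb.
by rewrite modnMml mulnA [(a * v)%N]mulnC.
Qed.


Lemma aut_gexp t : t \in Aut G -> exists2 v, coprime v p & t g = (g ^+ v)%g.
Proof.
move=> tA; have /Gexp [v _ ev] := Aut_closed tA gG.
exists v => //; rewrite coprime_sym prime_coprime //; apply/negP => pv.
have gv1 : (g ^+ v)%g = 1%g by apply/eqP; rewrite -order_dvdn ord_g.
have : t g = t 1%g by rewrite ev gv1 -(autmE tA) morph1.
move/perm_inj => g1; have := p_gt1; rewrite -ord_g g1 order1 //.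
Qed.

Lemma aut_exists v : coprime v p -> exists2 t, t \in Aut G & t g = (g ^+ v)%g.
Proof.
move=> cv.
have Hu : ((v%:R : 'Z_#[g]%g) \is a GRing.unit).
  by rewrite unitZpE ord_g ?p_gt1 // coprime_sym.
pose u := FinRing.unit 'Z_#[g]%g Hu.
exists (Zp_unitm u); first by rewrite defG Aut_aut.
rewrite /Zp_unitm autE ?cycle_id //= /cyclem val_Zp_nat ?ord_g ?p_gt1 //.
by rewrite -ord_g expg_mod_order.
Qed.


Lemma cancel_mod u a b : coprime u p -> (u * a = u * b %[mod p])%N -> (a = b %[mod p])%N.
Proof.
move=> cu e; have [w hw] := modinv p_gt0 cu.
have e2 : (w * (u * a) = w * (u * b) %[mod p])%N by rewrite -modnMmr e modnMmr.
move: e2; rewrite !mulnA ![(w * u)%N]mulnC -modnMml hw modnMml mul1n.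
by rewrite -[in RHS]modnMml hw modnMml mul1n.
Qed.

Lemma P_orth u c : coprime u p -> P u c *m (P u c)^T = 1%:M.
Proof.
move=> cu; apply/matrixP => a b; rewrite !mxE.
rewrite (bigD1 (Ordinal (ltn_pmod (u * a + c)%N p_gt0))) //= big1 => [|e /negbTE ne].
  rewrite !mxE eqxx mul1r addr0 /=.
  suff -> : (((u * a + c) %% p)%N == ((u * b + c) %% p)%N) = (a == b) by [].
  apply/idP/idP => [/eqP e|/eqP -> //].
  apply/eqP; apply: val_inj => /=.
  have : (u * a = u * b %[mod p])%N by apply/eqP; rewrite -(eqn_modDr c) e.
  by move/(cancel_mod cu); rewrite !modn_small.
rewrite !mxE; case: eqP => [ee|]; last by rewrite mul0r.
by case/eqP: ne; apply: val_inj.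
Qed.

Lemma trmxZ n (k : int) (A : 'M[int]_n) : (k *: A)^T = k *: A^T.
Proof. by apply/matrixP => i j; rewrite !mxE. Qed.

Lemma sP_orth (e : bool) u c : coprime u p ->
  ((-1) ^+ e *: P u c) *m ((-1) ^+ e *: P u c)^T = 1%:M.
Proof.
move=> cu; rewrite trmxZ -scalemxAl -scalemxAr scalerA -expr2 sqrr_sign scale1r.
exact: P_orth.
Qed.

Lemma innerE (x y : 'rV[int]_p) : inner x y = (x *m y^T) 0 0.
Proof. by rewrite mxE; apply: eq_bigr => i _; rewrite mxE. Qed.

Lemma orth_iso (M : 'M[int]_p) : M *m M^T = 1%:M ->
  bijective (fun u : 'rV[int]_p => u *m M) /\
  (forall u v : 'rV[int]_p, inner (u *m M) (v *m M) = inner u v).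
Proof.
move=> hM; split.
  exists (fun u => u *m M^T) => x /=; rewrite -mulmxA.
    by rewrite hM mulmx1.
  by rewrite (mulmx1C hM) mulmx1.
by move=> x y; rewrite !innerE trmx_mul !mulmxA -(mulmxA x) hM mulmx1.
Qed.


Lemma zXp m : (p %| m)%N -> z ^+ m = 1.
Proof. by move=> pm; rewrite -zX_mod (eqP pm) expr0. Qed.

Lemma geom m : \sum_(a < p) z ^+ (m * a) = if (p %| m)%N then p%:R else 0.
Proof.
case: ifP => pm.
  rewrite (eq_bigr (fun _ => 1)) => [|a _]; last by rewrite zXp ?dvdn_mulr.
  by rewrite sumr_const card_ord.
have w1 : z ^+ m != 1.
  by rewrite -(expr0 z) zX_eq mod0n; apply: contraFN pm => /eqP; rewrite /dvdn => ->.
have : (z ^+ m - 1) * \sum_(a < p) (z ^+ m) ^+ a = 0.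
  by rewrite -subrX1 -exprM zXp ?dvdn_mull // subrr.
move/eqP; rewrite mulf_eq0 subr_eq0 (negbTE w1) /= => /eqP H.
by rewrite (eq_bigr (fun a : 'I_p => (z ^+ m) ^+ a)) // => a _; rewrite exprM.
Qed.

Lemma IchiP (e : bool) u c (a : 'I_p) n :
  Ichi g z ((-1) ^+ e *: P u c) a (g ^+ n)%g = (-1) ^+ e * z ^+ ((u * a + c) * n).
Proof.
rewrite /Ichi (bigD1 (Ordinal (ltn_pmod (u * a + c)%N p_gt0))) //= big1 => [|b /negbTE nb].
  rewrite !mxE eqxx mulr1 addr0 chi_exp /= -zX_mod modnMml zX_mod.
  by rewrite rmorph_sign.
rewrite !mxE; case: eqP => [eb|]; last by rewrite mulr0 mul0r.
by case/eqP: nb; apply: val_inj.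
Qed.

Lemma muP (e : bool) u c i j :
  mu g z ((-1) ^+ e *: P u c) (g ^+ i)%g (g ^+ j)%g =
  (-1) ^+ e * z ^+ (c * i) * (if (p %| u * i + j)%N then p%:R else 0).
Proof.
rewrite /mu -geom mulr_sumr; apply: eq_bigr => a _.
rewrite IchiP chi_exp -!mulrA -!exprD; congr (_ * z ^+ _); ring.
Qed.

Lemma CG x : x \in G -> #|('C_G[x])%g| = p.
Proof.
move=> xG; suff -> : ('C_G[x])%g = G by [].
apply/setIidPl; apply/subsetP => y yG.
apply/cent1P; have [i _ ->] := Gexp yG; have [k _ ->] := Gexp xG.
exact: commuteX2.
Qed.

Lemma pelt i : (p^'.-elt (g ^+ i))%g = (p %| i)%N.
Proof.
rewrite /p_elt p'natE // orderXgcd ord_g.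
case: (boolP (p %| i)%N) => pi.
  by rewrite (gcdn_idPl pi) divnn p_gt0 dvdn1 neq_ltn p_gt1 orbT.
have -> : gcdn p i = 1%N by apply/eqP; rewrite -/(coprime p i) prime_coprime.
by rewrite divn1 dvdnn.
Qed.


Lemma isPI_P (e : bool) u c : coprime u p -> isPI G g z ((-1) ^+ e *: P u c).
Proof.
move=> cu; have [bij iso] := orth_iso (sP_orth e c cu).
split => // x y xG yG.
have [i _ ->] := Gexp xG; have [j _ ->] := Gexp yG.
rewrite !CG ?groupX ?gG // muP.
have pn0 : (p%:R : algC) != 0 by rewrite pnatr_eq0 -lt0n p_gt0.
have hO : inO p ((-1) ^+ e * z ^+ (c * i) *
      (if (p %| u * i + j)%N then p%:R else 0) / p%:R).
  exists 1%N; split; first exact: coprime1n.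
  rewrite mul1r; case: ifP => _; last by rewrite mulr0 mul0r Aint0.
  rewrite mulfK //; apply: rpredM; first exact: rpred_sign.
  by apply: rpredX; apply: Aint_prim_root prim_z.
split => //; case: ifP => [pd _ | _]; last by rewrite mulr0 eqxx.
rewrite !pelt; apply/idP/idP => [pi | pj].
  by rewrite -(dvdn_addr _ (dvdn_mull u pi)).
by move: pd; rewrite (dvdn_addl _ pj) Gauss_dvdr // coprime_sym.
Qed.


Lemma sum_split (F : nat -> algC) n :
  \sum_(i < n.+2) F i = F 0%N + \sum_(i < n) F i.+1 + F n.+1.
Proof. by rewrite big_ord_recr big_ord_recl. Qed.

Lemma frob : exists2 A, A \in Aint & (z - 1) ^+ p = p%:R * A.
Proof.
have zA : z \in Aint by apply: Aint_prim_root prim_z.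
pose A := \sum_(i < p.-1) (z ^+ (p - i.+1) * (-1) ^+ i.+1) *+ ('C(p, i.+1) %/ p) +
          (if p == 2%N then 1 else 0).
exists A.
  rewrite /A; apply: rpredD; last by case: ifP => _; rewrite ?Aint1 ?Aint0.
  apply: rpred_sum => i _; apply: rpredMn; apply: rpredM; apply: rpredX => //.
  by rewrite rpredN Aint1.
have Ep : p = p.-1.+1 by rewrite prednK // p_gt0.
rewrite exprDn.
have := sum_split (fun i => z ^+ (p - i) * (-1) ^+ i *+ 'C(p, i)) p.-1.
rewrite -Ep => ->.
rewrite subnn expr0 mul1r binn mulr1n subn0 zXp // mulr1 bin0 mulr1n.
rewrite /A mulrDr mulr_sumr.
have -> : \sum_(i < p.-1) z ^+ (p - i.+1) * (-1) ^+ i.+1 *+ 'C(p, i.+1) =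
   \sum_(i < p.-1) p%:R * (z ^+ (p - i.+1) * (-1) ^+ i.+1 *+ ('C(p, i.+1) %/ p)).
  apply: eq_bigr => i _; rewrite mulr_natl -mulrnA divnK //.
  apply: prime_dvd_bin => //=; rewrite {2}Ep ltnS ltn_ord.
  by [].
rewrite [1 + _]addrC -addrA; congr (_ + _).
have [p2|op] := even_prime pr_p.
  by rewrite p2 eqxx /= mulr1 expr2 mulrNN mulr1.
have -> : (p == 2%N) = false by apply/negbTE; apply: contraTneq op => ->.
by rewrite mulr0 -signr_odd op /= expr1 subrr.
Qed.

Lemma lemX (n1 n2 : nat) Y : Y \in Aint -> n1%:R - n2%:R = (z - 1) * Y ->
  (n1 = n2 %[mod p])%N.
Proof.
move=> YA e; pose q : int := (n1%:Z - n2%:Z).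
have dq : n1%:R - n2%:R = q%:~R :> algC by rewrite /q rmorphB.
have [A AA eA] := frob.
have h : ((q ^+ p)%:~R == 0 %[mod p%:R])%A.
  have dqp : (q ^+ p)%:~R = (n1%:R - n2%:R : algC) ^+ p by rewrite dq rmorphXn.
  rewrite eqAmod0 dqp e exprMn eA -mulrA.
  have pn0 : (p%:R : algC) != 0 by rewrite pnatr_eq0 -lt0n p_gt0.
  rewrite /dvdA unfold_in (negbTE pn0) [p%:R * _]mulrC mulfK //.
  by apply: rpredM => //; apply: rpredX.
move: h; rewrite eqAmod0_rat ?rpred_int ?rpred_nat // dvdC_int ?rpred_int //.
rewrite intrKfloor abszX Euclid_dvdX // p_gt0 andbT => pq.
suff : ((n1%:Z %% p%:Z)%Z = (n2%:Z %% p%:Z)%Z) by rewrite !modz_nat => -[].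
by apply/eqP; rewrite eqz_mod_dvd dvdzE.
Qed.


Lemma dvd_shift (a b : 'I_p) : (p %| a + (p - b))%N = (a == b).
Proof.
rewrite /dvdn; have -> : 0%N = ((b + (p - b)) %% p)%N.
  by rewrite subnKC ?modnn // ltnW.
by rewrite eqn_modDr !modn_small.
Qed.

Lemma dft (F : 'I_p -> algC) (b : 'I_p) :
  \sum_(j < p) z ^+ ((p - b) * j) * \sum_(a < p) F a * z ^+ (a * j) = p%:R * F b.
Proof.
under eq_bigr do rewrite mulr_sumr.
rewrite exchange_big /=.
rewrite (eq_bigr (fun a : 'I_p => F a * (if (p %| a + (p - b))%N then p%:R else 0))).
  rewrite (bigD1 b) //= big1 => [|a /negbTE nab]; last by rewrite dvd_shift nab mulr0.
  by rewrite dvd_shift eqxx addr0 mulrC.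
move=> a _; rewrite -geom mulr_sumr; apply: eq_bigr => j _.
by rewrite mulrCA -exprD mulnDl addnC.
Qed.

Lemma count_lem (N : 'I_p -> nat) b0 : (forall b c, N b = N c %[mod p])%N ->
  (\sum_b N b = p)%N -> (1 < N b0)%N -> N b0 = p.
Proof.
move=> Hm Hs H2.
have le : (N b0 <= p)%N by rewrite -Hs (bigD1 b0) //= leq_addr.
case: (ltngtP (N b0) p) => // lt; last by move: le; rewrite leqNgt lt.
have ge c : (2 <= N c)%N.
  have := leq_mod (N c) p; rewrite (Hm c b0) (modn_small lt); lia.
have : (\sum_(c < p) 2 <= \sum_(c < p) N c)%N by apply: leq_sum => c _; exact: ge.
rewrite Hs sum_nat_const card_ord => h.
have := p_gt0; lia.
Qed.

Lemma ind_lem (k : 'I_p -> 'I_p) b0 : (\sum_(a < p) (k a == b0 : nat) = p)%N ->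
  forall a, k a = b0.
Proof.
move=> H a; apply/eqP; apply/negPn/negP => na.
have : (\sum_(a' < p) (k a' == b0 : nat) <= p.-1)%N.
  rewrite (bigD1 a) //= (negbTE na) add0n.
  apply: (@leq_trans (\sum_(i < p | i != a) 1)%N).
    by apply: leq_sum => i _; apply: leq_b1.
  by rewrite sum1_card cardC1 card_ord.
rewrite H; have := p_gt0; lia.
Qed.


Lemma inner_delta (a b : 'I_p) : inner (delta_mx 0 a) (delta_mx 0 b) = (a == b)%:R.
Proof.
rewrite /inner (bigD1 a) //= big1 => [|i /negbTE ia]; last by rewrite !mxE ia mul0r.
by rewrite !mxE !eqxx mul1r addr0 eq_sym.
Qed.

Lemma inner_row (M : 'M[int]_p) a b :
  inner (delta_mx 0 a *m M) (delta_mx 0 b *m M) = \sum_c M a c * M b c.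
Proof. by rewrite -!rowE /inner; apply: eq_bigr => c _; rewrite !mxE. Qed.

Lemma sq1 (F : 'I_p -> int) : \sum_i F i * F i = 1 ->
  exists b, F b * F b = 1 /\ forall b', b' != b -> F b' = 0.
Proof.
move=> H.
have [b Fb] : exists b, F b != 0.
  case: (pickP (fun b => F b != 0)) => [b Fb|h]; first by exists b.
  move: H; rewrite big1 // => i _; have := h i; rewrite /= => /negbFE/eqP ->.
  by rewrite mul0r.
move: H; rewrite (bigD1 b) //=.
have s0 : 0 <= \sum_(i < p | i != b) F i * F i.
  by apply: sumr_ge0 => i _; rewrite -expr2 sqr_ge0.
have f1 : 1 <= F b * F b.
  have : F b <> 0 by apply/eqP.
  nia.
move: s0 f1; set x := F b * F b; set y := \sum_(i < p | i != b) _.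
move=> s0 f1 H; have e1 : x = 1 by lia.
have e0 : y = 0 by lia.
exists b; split => // b' nb'.
have := psumr_eq0P _ e0 nb'.
have h : forall i, i != b -> 0 <= F i * F i by move=> i _; rewrite -expr2 sqr_ge0.
move/(_ h)/eqP; rewrite mulf_eq0 orbb => /eqP //.
Qed.


Lemma A1 (M : 'M[int]_p) :
  (forall u v : 'rV[int]_p, inner (u *m M) (v *m M) = inner u v) ->
  exists pi : 'I_p -> 'I_p, exists eps : 'I_p -> int,
   [/\ forall a b, M a b = if b == pi a then eps a else 0,
       forall a, eps a * eps a = 1 & injective pi].
Proof.
move=> iso.
have rowE1 a b : \sum_c M a c * M b c = (a == b)%:R.
  by rewrite -inner_row iso inner_delta.
have /fin_all_exists [pi Hpi] : forall a, exists b, M a b * M a b = 1 /\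
    forall b', b' != b -> M a b' = 0.
  by move=> a; apply: sq1; rewrite rowE1 eqxx.
exists pi, (fun a => M a (pi a)); split.
- move=> a b; case: eqP => [-> //|/eqP nb]; exact: (Hpi a).2.
- by move=> a; case: (Hpi a).
move=> a a' e; apply/eqP; apply/negPn/negP => na.
have nz (x : int) : x * x = 1 -> x != 0.
  by move=> hx; apply/eqP => x0; move: hx; rewrite x0 mul0r.
have := rowE1 a a'; rewrite (negbTE na) (bigD1 (pi a)) //= big1 => [|c nc].
  rewrite addr0 {2}e => /eqP; rewrite mulf_eq0.
  by rewrite (negbTE (nz _ (Hpi a).1)) (negbTE (nz _ (Hpi a').1)).
by rewrite ((Hpi a).2 c nc) mul0r.
Qed.

Lemma Ichi_pi (M : 'M[int]_p) (pi : 'I_p -> 'I_p) (eps : int) a n :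
  (forall b, M a b = if b == pi a then eps else 0) ->
  Ichi g z M a (g ^+ n)%g = eps%:~R * z ^+ (pi a * n).
Proof.
move=> hM; rewrite /Ichi (bigD1 (pi a)) //= big1 => [|b /negbTE nb].
  by rewrite hM eqxx chi_exp addr0.
by rewrite hM nb mul0r.
Qed.


Lemma pn0 : (p%:R : algC) != 0.
Proof. by rewrite pnatr_eq0 -lt0n p_gt0. Qed.

Lemma A2 (M : 'M[int]_p) pi (eps : 'I_p -> int) :
  (forall a b, M a b = if b == pi a then eps a else 0) -> perfect G g z M ->
  forall a, eps a = eps o0.
Proof.
move=> hM perf.
have muE (j : nat) : mu g z M 1%g (g ^+ j)%g = \sum_a (eps a)%:~R * z ^+ (a * j).
  rewrite /mu; apply: eq_bigr => a _.
  have -> : 1%g = (g ^+ 0)%g by rewrite expg0.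
  by rewrite (Ichi_pi _ (hM a)) muln0 expr0 mulr1 chi_exp.
have mu0 (j : 'I_p) : j != o0 -> mu g z M 1%g (g ^+ j)%g = 0.
  move=> nj; have [_ _ h] := perf 1%g (g ^+ j)%g (group1 _) (groupX _ gG).
  case: (eqVneq (mu g z M 1%g (g ^+ j)%g) 0) => // /h.
  rewrite p_elt1 pelt gtnNdvd //; last by rewrite lt0n.
have key b : p%:R * (eps b)%:~R = mu g z M 1%g (g ^+ 0)%g.
  rewrite -(dft (fun a => (eps a)%:~R)); under eq_bigr do rewrite -muE.
  rewrite (bigD1 o0) //= big1 ?addr0 => [|j nj]; first by rewrite muln0 expr0 mul1r.
  by rewrite mu0 // mulr0.
move=> a; apply: (@intr_inj algC); apply: (mulfI pn0).
by rewrite key -(key o0).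
Qed.


Lemma A3 (M : 'M[int]_p) (pi : 'I_p -> 'I_p) (eps : int) :
  (forall a b, M a b = if b == pi a then eps else 0) -> eps * eps = 1 ->
  injective pi -> perfect G g z M ->
  exists2 u, coprime u p & forall a, (pi a : nat) = ((u * a + pi o0) %% p)%N.
Proof.
move=> hM heps pinj perf.
have zA : z \in Aint by apply: Aint_prim_root prim_z.
set j := (p - pi o1 + pi o0)%N.
pose k (a : 'I_p) : 'I_p := Ordinal (ltn_pmod (pi a + a * j)%N p_gt0).
pose N (c : 'I_p) : nat := (\sum_a (k a == c : nat))%N.
pose w (t : nat) : algC := \sum_c (N c)%:R * z ^+ (c * t).
have muw (t : nat) : mu g z M (g ^+ t)%g (g ^+ (j * t))%g = eps%:~R * w t.
  have E1 a : Ichi g z M a (g ^+ t)%g * chi g z a (g ^+ (j * t))%g =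
      eps%:~R * z ^+ (k a * t).
    rewrite (Ichi_pi _ (hM a)) chi_exp -mulrA -exprD; congr (_ * _).
    rewrite /= -[in RHS]zX_mod modnMml zX_mod; congr (z ^+ _); ring.
  rewrite /mu (eq_bigr _ (fun a _ => E1 a)) -mulr_sumr; congr (_ * _).
  rewrite /w /N.
  symmetry; under eq_bigr do rewrite natr_sum mulr_suml.
  rewrite exchange_big /=; apply: eq_bigr => a _.
  rewrite (bigD1 (k a)) //= eqxx mul1r big1 ?addr0 // => c nc.
  by rewrite eq_sym (negbTE nc) mul0r.
have e2 : (eps%:~R : algC) * eps%:~R = 1 by rewrite -intrM heps.
have inOt (t : 'I_p) : exists m, coprime m p /\ m%:R * (w t / p%:R) \in Aint.
  have [h _ _] := perf (g ^+ t)%g (g ^+ (j * t))%g (groupX _ gG) (groupX _ gG).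
  move: h; rewrite CG ?groupX ?gG // muw => -[m [cm hm]]; exists m; split => //.
  have : eps%:~R * (m%:R * (eps%:~R * w t / p%:R)) \in Aint.
    by apply: rpredM => //; apply: Aint_int.
  suff -> : eps%:~R * (m%:R * (eps%:~R * w t / p%:R)) =
     (eps%:~R * eps%:~R) * (m%:R * (w t / p%:R)) by rewrite e2 mul1r.
  ring.
have /fin_all_exists [m Hm] := inOt.
pose M' := (\prod_(t < p) m t)%N.
have cM' : coprime M' p.
  by apply: (big_ind (fun n => coprime n p)) => [|x y cx cy|t _];
    rewrite ?coprime1n ?coprimeMl ?cx ?cy ?(Hm t).1.
have XA (t : 'I_p) : M'%:R * (w t / p%:R) \in Aint.
  rewrite /M' (bigD1 t) //= natrM [(m t)%:R * _]mulrC -mulrA.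
  by apply: rpredM; [apply: rpred_nat | exact: (Hm t).2].
have NE (b : 'I_p) : (M' * N b)%:R =
    \sum_(t < p) z ^+ ((p - b) * t) * (M'%:R * (w t / p%:R)).
  rewrite (eq_bigr (fun t : 'I_p => (M'%:R / p%:R) * (z ^+ ((p - b) * t) * w t)));
    last by move=> t _; ring.
  by rewrite -mulr_sumr (dft (fun c => (N c)%:R) b) mulrA divfK ?pn0 // natrM.
have cong (b c : 'I_p) : (N b = N c %[mod p])%N.
  apply: (cancel_mod cM').
  pose Y := \sum_(t < p) ((\sum_(i < (p - b) * t) z ^+ i) -
      (\sum_(i < (p - c) * t) z ^+ i)) * (M'%:R * (w t / p%:R)).
  apply: (@lemX _ _ Y).
    apply: rpred_sum => t _; apply: rpredM => //.
    by apply: rpredB; apply: rpred_sum => i _; apply: rpredX.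
  rewrite !NE -sumrB /Y mulr_sumr; apply: eq_bigr => t _.
  by rewrite [RHS]mulrA [(z - 1) * _]mulrBr -!subrX1; ring.
have sumN : (\sum_c N c = p)%N.
  rewrite /N exchange_big /= (eq_bigr (fun _ => 1%N)) ?sum_nat_const ?card_ord ?muln1 //.
  move=> a _; rewrite (bigD1 (k a)) //= eqxx big1 // => c nc.
  by rewrite eq_sym (negbTE nc).
have k0 : k o0 = pi o0 by apply: val_inj; rewrite /= mul0n addn0 modn_small.
have k1 : k o1 = pi o0.
  by apply: val_inj; rewrite /= mul1n /j addnA subnKC ?modnDl ?modn_small // ltnW.
have o10 : o1 != o0 by rewrite -val_eqE.
have N2 : (1 < N (pi o0))%N.
  rewrite /N (bigD1 o0) //= (bigD1 o1) //= k0 k1 eqxx.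
  by rewrite addnA leq_addr.
have allk := ind_lem (count_lem cong sumN N2).
exists (pi o1 + p - pi o0)%N.
  rewrite coprime_sym prime_coprime //; apply/negP => pd.
  have le : (pi o0 <= pi o1 + p)%N by rewrite ltnW // ltn_addl.
  have : (pi o1 + p = pi o0 %[mod p])%N.
    by rewrite -[(pi o1 + p)%N](subnK le) -modnDml (eqP pd) add0n.
  rewrite modnDr !modn_small // => /val_inj/pinj /eqP.
  by rewrite (negbTE o10).
move=> a; have := congr1 val (allk a); rewrite /= => h.
have e1 : (pi a + a * j + a * (pi o1 + p - pi o0) = (a * 2) * p + pi a)%N.
  have hu : (j + (pi o1 + p - pi o0) = 2 * p)%N.
    by rewrite /j; have := ltn_ord (pi o0); have := ltn_ord (pi o1); lia.
  by rewrite -addnA -mulnDr hu; ring.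
have : ((pi a + a * j + a * (pi o1 + p - pi o0)) %% p =
        (pi o0 + a * (pi o1 + p - pi o0)) %% p)%N by rewrite -modnDml h.
by rewrite e1 modnMDl modn_small // => ->; rewrite addnC mulnC.
Qed.


Lemma classify (M : 'M[int]_p) : isPI G g z M ->
  exists e : bool, exists2 u, coprime u p & exists c, M = (-1) ^+ e *: P u c.
Proof.
case=> _ iso perf.
have [pi [eps [hM he pinj]]] := A1 iso.
have ec := A2 hM perf.
have hM' a b : M a b = if b == pi a then eps o0 else 0 by rewrite hM ec.
have [u cu hu] := A3 hM' (he o0) pinj perf.
have [e Ee] : exists e : bool, eps o0 = (-1) ^+ e.
  have := he o0; move/eqP; rewrite -expr2 sqrf_eq1 => /orP[] /eqP ->.
    by exists false.
  by exists true.
exists e, u => //; exists (pi o0 : nat); apply/matrixP => a b.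
rewrite hM' !mxE Ee -val_eqE /= -hu.
by case: eqP; rewrite ?mulr1 ?mulr0.
Qed.


Lemma I_P (c : 'I_p) : @Lmx _ G p g z (chi g z c) = P 1 c.
Proof. by apply: Lmx_P => n; rewrite chi_exp. Qed.

Lemma J_P s : s \in Aut G ->
  exists2 v, coprime v p & @Amx _ G p g z s = P v 0 /\ (s^-1)%g g = (g ^+ v)%g.
Proof.
move=> sA; have siA : (s^-1)%g \in Aut G by rewrite groupV.
have [v cv hv] := aut_gexp siA; exists v => //; split => //.
exact: Amx_P.
Qed.

Lemma isPI_IJ (e : bool) (c : 'I_p) s : s \in Aut G ->
  isPI G g z ((-1) ^+ e *: (@Lmx _ G p g z (chi g z c) *m @Amx _ G p g z s)).
Proof.
move=> sA; have [v cv [E _]] := J_P sA.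
by rewrite E I_P PM mul1n; apply: isPI_P.
Qed.

Lemma IJ_of_P u c : coprime u p ->
  exists2 d : 'I_p, True & exists2 s, s \in Aut G &
    @Lmx _ G p g z (chi g z d) *m @Amx _ G p g z s = P u c.
Proof.
move=> cu; have [t tA tg] := aut_exists cu.
have siA : (t^-1)%g \in Aut G by rewrite groupV.
have [w hw] := modinv p_gt0 cu.
exists (Ordinal (ltn_pmod (c * w)%N p_gt0)) => //; exists (t^-1)%g => //.
rewrite I_P (@Amx_P _ u siA) ?invgK // PM mul1n addn0; apply: P_eqmod => //=.
by rewrite modnMml -mulnA [(w * u)%N]mulnC -modnMmr hw modnMmr muln1.
Qed.

Definition psi (x : gT) : 'I_p := odflt o0 [pick k : 'I_p | x == (g ^+ k)%g].

Lemma psiE x : x \in G -> x = (g ^+ psi x)%g.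
Proof.
move=> xG; rewrite /psi; case: pickP => [k /eqP //| h].
have [k kp ek] := Gexp xG; have := h (Ordinal kp); rewrite /= ek eqxx //.
Qed.

Lemma psi_gX n : (psi (g ^+ n)%g : nat) = (n %% p)%N.
Proof.
have := psiE (groupX n gG) => /eqP; rewrite gX_eq => /eqP ->.
by rewrite modn_small.
Qed.

Lemma psi_inj : {in G &, injective psi}.
Proof. by move=> x y xG yG e; rewrite (psiE xG) (psiE yG) e. Qed.

Lemma psiM x y : x \in G -> y \in G ->
  (psi (x * y)%g : nat) = ((psi x + psi y) %% p)%N.
Proof. by move=> xG yG; rewrite {1}(psiE xG) {1}(psiE yG) -expgD psi_gX. Qed.

Lemma alphaP a : a \in Aut G -> @Amx _ G p g z (a^-1)%g = P (psi (a g)) 0.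
Proof.
move=> aA; apply: Amx_P; first by rewrite groupV.
by rewrite invgK -psiE // Aut_closed ?gG.
Qed.


Definition Fm (a : {perm gT}) (x : gT) : 'M[int]_p :=
  @Amx _ G p g z (a^-1)%g *m @Lmx _ G p g z (chi g z (psi x)).

Lemma FmE a x : a \in Aut G -> Fm a x = P (psi (a g)) (psi x).
Proof. by move=> aA; rewrite /Fm alphaP // I_P PM muln1 mul0n. Qed.

Lemma psi_aut a x : a \in Aut G -> x \in G ->
  (psi (a x) : nat) = ((psi (a g) * psi x) %% p)%N.
Proof.
move=> aA xG; rewrite {1}(psiE xG) aut_exp // {1}(psiE (Aut_closed aA gG)).
by rewrite -expgM psi_gX.
Qed.

Lemma FmM a b x y : a \in Aut G -> b \in Aut G -> x \in G -> y \in G ->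
  Fm (a * b)%g (b x * y)%g = Fm a x *m Fm b y.
Proof.
move=> aA bA xG yG; rewrite !FmE ?groupM // PM permM.
apply: P_eqmod.
  by rewrite psi_aut ?Aut_closed ?gG // modn_mod mulnC.
by rewrite psiM ?Aut_closed // psi_aut // modnDml modn_mod mulnC.
Qed.


Lemma J_M s t : s \in Aut G -> t \in Aut G ->
  @Amx _ G p g z (s * t)%g = @Amx _ G p g z s *m @Amx _ G p g z t.
Proof.
move=> sA tA; have [vs _ [Es hs]] := J_P sA; have [vt _ [Et ht]] := J_P tA.
rewrite Es Et PM mul0n addn0 (@Amx_P _ (vs * vt)%N (groupM sA tA)) //.
by rewrite invMg permM ht aut_exp ?groupV // hs -expgM.
Qed.

Lemma aut_eq_g a b : a \in Aut G -> b \in Aut G -> a g = b g -> a = b.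
Proof.
move=> aA bA e; apply: (eq_Aut (A:=G)) => // x xG.
by rewrite (psiE xG) !aut_exp // e.
Qed.

Lemma J_inj : {in Aut G &, injective (@Amx _ G p g z)}.
Proof.
move=> s t sA tA; have [vs _ [Es hs]] := J_P sA; have [vt _ [Et ht]] := J_P tA.
rewrite Es Et => /P_inj [e _].
have e1 : (s^-1)%g g = (t^-1)%g g by rewrite hs ht; apply/eqP; rewrite gX_eq e.
have : (s^-1)%g = (t^-1)%g by apply: aut_eq_g; rewrite ?groupV.
exact: invg_inj.
Qed.

Lemma I_inj (c d : 'I_p) : @Lmx _ G p g z (chi g z c) = @Lmx _ G p g z (chi g z d) -> c = d.
Proof.
rewrite !I_P => /P_inj [_ e]; apply: val_inj.
by move: e; rewrite !modn_small.
Qed.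


Lemma sdmem (u : sdprod_by (aut_groupAction G)) : (val u).1 \in Aut G /\ (val u).2 \in G.
Proof. by case: u => [[a x]] /= /setXP. Qed.

Lemma main_sec :
  let PI := @isPI gT G p g z in
  let I_ (c : 'I_p) := @Lmx gT G p g z (chi g z c) in
  let J_ := @Amx gT G p g z in
  [/\
   [/\ forall c, PI (I_ c),
       {in Aut G, forall s, PI (J_ s)}
     & PI (- 1%:M)],
   [/\ forall c d, @Lmx gT G p g z (fun h => chi g z c h * chi g z d h) = I_ c *m I_ d
     & forall c d, I_ c = I_ d -> c = d],
   [/\ {in Aut G &, forall s t, J_ (s * t)%g = J_ s *m J_ t}
     & {in Aut G &, injective J_}],
   [/\ forall c, {in Aut G, forall s, exists d, J_ (s^-1)%g *m I_ c *m J_ s = I_ d},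
       (forall c, {in Aut G, forall s, I_ c = J_ s -> I_ c = 1%:M}),
       (- 1%:M : 'M[int]_p) != 1%:M,
       (forall c, {in Aut G, forall s, I_ c *m J_ s != - 1%:M})
     & (forall M, PI M -> M *m (- 1%:M) = (- 1%:M) *m M)]
 & [/\
   (forall M, PI M <-> exists c, exists2 s, s \in Aut G &
        exists e : bool, M = (- 1) ^+ e *: (I_ c *m J_ s)),
   (forall M, (PI M /\ allpos M) <-> exists c, exists2 s, s \in Aut G &
        M = I_ c *m J_ s),
   [/\ exists psi : gT -> 'I_p, {in G &, injective psi} /\
         {in G &, forall x y, {in G, forall h,
            chi g z (psi (x * y)%g) h = chi g z (psi x) h * chi g z (psi y) h}}
     & exists phi : gT -> 'M[int]_p, [/\ {in G &, injective phi},
         {in G &, forall x y, phi (x * y)%g = phi x *m phi y}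
       & forall M, (exists c, M = I_ c) <-> exists2 x, x \in G & phi x = M]]
 & exists f : (sdprod_by (aut_groupAction G) * 'Z_2)%type -> 'M[int]_p,
     [/\ injective f,
         forall u v, f (u * v)%g = f u *m f v
       & forall M, PI M <-> exists u, f u = M]]].
Proof.
move=> PI I_ J_; rewrite {}/PI {}/I_ {}/J_.
have c1 := coprime1n p.
split.
- split.
  + by move=> c; have := isPI_P false c c1; rewrite expr0 scale1r I_P.
  + move=> s sA; have [v cv [E _]] := J_P sA; rewrite E.
    by have := isPI_P false 0 cv; rewrite expr0 scale1r.
  + by have := isPI_P true 0 c1; rewrite P10 expr1 scaleN1r.
- split; last exact: I_inj.
  move=> c d; rewrite !I_P PM muln1; apply: Lmx_P => n.
  by rewrite !chi_exp -exprD muln1 mulnDl.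
- by split; [exact: J_M | exact: J_inj].
- split.
  + move=> c s sA; have siA : (s^-1)%g \in Aut G by rewrite groupV.
    have [v' _ [E' _]] := J_P siA; have [v _ [E _]] := J_P sA.
    have hv : (v' * v = 1 %[mod p])%N.
      have := J_M siA sA; rewrite mulVg E' E PM mul0n addn0.
      rewrite (@Amx_P _ 1 (group1 _)) ?invg1 ?perm1 ?expg1 // => /esym/P_inj [].
      by [].
    exists (Ordinal (ltn_pmod (c * v)%N p_gt0)).
    rewrite E' E !I_P !PM; apply: P_eqmod => /=; first by rewrite muln1 hv.
    by rewrite mul0n add0n addn0 modn_mod.
  + move=> c s sA; have [v _ [E _]] := J_P sA; rewrite E I_P => /P_inj [_ e].
    by rewrite (P_eqmod (erefl _) e) P10.
  + apply/eqP => /matrixP /(_ o0 o0); rewrite !mxE eqxx /=.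
    by move/eqP.
  + move=> c s sA; have [v _ [E _]] := J_P sA; rewrite E I_P PM.
    apply/eqP => /matrixP /(_ o0 o0); rewrite !mxE eqxx /=.
    by case: eqP.
  + by move=> M _; rewrite mulmxN mulNmx mulmx1 mul1mx.
split.
- move=> M; split.
    move/classify => [e [u cu [c ->]]].
    have [d _ [s sA E]] := IJ_of_P c cu.
    by exists d, s => //; exists e; rewrite E.
  by case=> c [s sA [e ->]]; apply: isPI_IJ.
- move=> M; split.
    case=> /classify [e [u cu [c0 ->]]] ap.
    have e0 : e = false.
      have [b hb] := ap o0.
      have := hb (Ordinal (ltn_pmod c0 p_gt0)); rewrite !mxE /= muln0 add0n eqxx mulr1.
      by case: e {ap hb} => //; rewrite expr1; case: eqP.
    have [d _ [s sA E]] := IJ_of_P c0 cu.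
    by exists d, s => //; rewrite e0 expr0 scale1r E.
  case=> c [s sA ->]; split.
    by have := isPI_IJ false c sA; rewrite expr0 scale1r.
  have [v _ [E _]] := J_P sA; rewrite I_P E PM mul1n.
  move=> a; exists (Ordinal (ltn_pmod (v * a + c * v)%N p_gt0)) => b.
  by rewrite mxE -val_eqE /= addn0.
split.
- exists psi; split; first exact: psi_inj.
  move=> x y xG yG h hG; have [m _ ->] := Gexp hG.
  by rewrite !chi_exp psiM // -exprD -zX_mod modnMml zX_mod mulnDl.
- exists (fun x => @Lmx gT G p g z (chi g z (psi x))); split.
  + by move=> x y xG yG /I_inj; apply: psi_inj.
  + move=> x y xG yG; rewrite !I_P PM muln1; apply: P_eqmod => //.
    by rewrite psiM // modn_mod muln1.
  + move=> M; split => [[c ->]|[x xG <-]]; last by exists (psi x).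
    exists (g ^+ c)%g; first by rewrite groupX ?gG.
    by congr (Lmx _ _ _ (chi _ _ _)); apply: val_inj; rewrite /= psi_gX modn_small.
pose f (u : (sdprod_by (aut_groupAction G) * 'Z_2)%type) : 'M[int]_p :=
  (-1) ^+ (nat_of_ord u.2) *: Fm (val u.1).1 (val u.1).2.
exists f; split.
- move=> [u1 e1] [u2 e2]; rewrite /f /=.
  have [a1A x1G] := sdmem u1; have [a2A x2G] := sdmem u2.
  rewrite !FmE // -[(-1) ^+ (nat_of_ord e1)]signr_odd -[(-1) ^+ (nat_of_ord e2)]signr_odd.
  case/sP_inj => oe /P_inj [ea ex].
  have ea' : psi ((val u1).1 g) = psi ((val u2).1 g).
    by apply: val_inj; move: ea; rewrite !modn_small.
  have ex' : psi (val u1).2 = psi (val u2).2.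
    by apply: val_inj; move: ex; rewrite !modn_small.
  have ha : (val u1).1 = (val u2).1.
    apply: aut_eq_g => //.
    by rewrite (psiE (Aut_closed a1A gG)) (psiE (Aut_closed a2A gG)) ea'.
  have hx : (val u1).2 = (val u2).2 by apply: psi_inj.
  have hu : u1 = u2.
    by apply: val_inj; rewrite [val u1]surjective_pairing [val u2]surjective_pairing ha hx.
  have he : e1 = e2.
    apply: val_inj; move: oe (ltn_ord e1) (ltn_ord e2) => /=.
    by case: (nat_of_ord e1) => [|[|]] //; case: (nat_of_ord e2) => [|[|]].
  by rewrite hu he.
- move=> [u1 e1] [u2 e2]; rewrite /f /=.
  have [a1A x1G] := sdmem u1; have [a2A x2G] := sdmem u2.
  rewrite -scalemxAl -scalemxAr scalerA -exprD -signr_odd odd_mod // signr_odd.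
  by congr (_ *: _); apply: FmM.
move=> M; split.
  move/classify => [e [w cw [c ->]]].
  have [a aA ag] := aut_exists cw.
  have xG : (g ^+ c)%g \in G by rewrite groupX ?gG.
  have H : (a, (g ^+ c)%g) \in setX (Aut G) G by apply/setXP.
  have e2 : ((e : nat) < 2)%N by case: e.
  exists (SdPair (aut_groupAction G) H, (Ordinal e2 : 'Z_2)).
  rewrite /f /= FmE // ag; congr (_ *: _); apply: P_eqmod; rewrite psi_gX ?modn_mod //.
case=> [[u1 e1]] <-; rewrite /f /=.
have [a1A x1G] := sdmem u1.
rewrite FmE // -signr_odd; apply: isPI_P.
have [v cv ->] := aut_gexp a1A.
by rewrite psi_gX coprime_modl.
Qed.

End S.

Unset Implicit Arguments.
Set Strict Implicit.

Theorem mainTheorem13 (p : nat) (gT : finGroupType) (G : {group gT}) (g : gT)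
  (z : algC) :
  prime p -> G = <[g]>%G -> #|G| = p -> p.-primitive_root z ->
  let PI := @isPI gT G p g z in
  let I_ (c : 'I_p) := @Lmx gT G p g z (chi g z c) in
  let J_ := @Amx gT G p g z in
  [/\
   (* L, A and <-id> consist of perfect isometries *)
   [/\ forall c, PI (I_ c),
       {in Aut G, forall s, PI (J_ s)}
     & PI (- 1%:M)],
   (* L = {I_lambda} is isomorphic to Irr(B) via lambda |-> I_lambda *)
   [/\ forall c d, @Lmx gT G p g z (fun h => chi g z c h * chi g z d h) = I_ c *m I_ d
     & forall c d, I_ c = I_ d -> c = d],
   (* A = {I_sigma} is isomorphic to Aut(G) via sigma |-> I_sigma *)
   [/\ {in Aut G &, forall s t, J_ (s * t)%g = J_ s *m J_ t}
     & {in Aut G &, injective J_}],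
   (* internal semidirect product L >| A, and direct factor <-id> *)
   [/\ forall c, {in Aut G, forall s, exists d, J_ (s^-1)%g *m I_ c *m J_ s = I_ d},
       (forall c, {in Aut G, forall s, I_ c = J_ s -> I_ c = 1%:M}),
       (- 1%:M : 'M[int]_p) != 1%:M,
       (forall c, {in Aut G, forall s, I_ c *m J_ s != - 1%:M})
     & (forall M, PI M -> M *m (- 1%:M) = (- 1%:M) *m M)]
 & [/\
   (* PI(B) = (L >| A) x <-id> *)
   (forall M, PI M <-> exists c, exists2 s, s \in Aut G &
        exists e : bool, M = (- 1) ^+ e *: (I_ c *m J_ s)),
   (* L >| A = perfect isometries with all-positive sign *)
   (forall M, (PI M /\ allpos M) <-> exists c, exists2 s, s \in Aut G &
        M = I_ c *m J_ s),
   (* L ~= Irr(B) ~= G *)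
   [/\ exists psi : gT -> 'I_p, {in G &, injective psi} /\
         {in G &, forall x y, {in G, forall h,
            chi g z (psi (x * y)%g) h = chi g z (psi x) h * chi g z (psi y) h}}
     & exists phi : gT -> 'M[int]_p, [/\ {in G &, injective phi},
         {in G &, forall x y, phi (x * y)%g = phi x *m phi y}
       & forall M, (exists c, M = I_ c) <-> exists2 x, x \in G & phi x = M]]
   (* PI(B) ~= (G >| Aut(G)) x C_2 *)
 & exists f : (sdprod_by (aut_groupAction G) * 'Z_2)%type -> 'M[int]_p,
     [/\ injective f,
         forall u v, f (u * v)%g = f u *m f v
       & forall M, PI M <-> exists u, f u = M]]].
Proof.
move=> pr dG cG pz.
exact: (main_sec pr dG cG pz).
Qed.
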